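(* Let $\mathcal{S}_1,\dots,\mathcal{S}_n\subseteq\mathbb{R}^D$ be independent linear subspaces (i.e. $\sum_{\ell=1}^n d_\ell=\dim(\sum_\ell\mathcal{S}_\ell)$, $d_\ell=\dim\mathcal{S}_\ell$), and let $\mathcal{X}=\{\boldsymbol{x}_1,\dots,\boldsymbol{x}_N\}\subseteq\bigcup_\ell\mathcal{S}_\ell$ consist of unit-norm vectors such that each $\mathcal{S}_\ell$ contains at least $d_\ell$ points of $\mathcal{X}$ spanning $\mathcal{S}_\ell$. For every integer $k\ge\sum_{\ell=1}^n d_\ell$, any $\mathcal{X}_0^*\in\arg\min_{\mathcal{X}_0\subseteq\mathcal{X},|\mathcal{X}_0|\le k}F_\infty(\mathcal{X}_0)$ contains at least $d_\ell$ linearly independent points from each $\mathcal{S}_\ell$. Moreover, with $\mathcal{X}_0=\mathcal{X}_0^*$, the problem defining $f_\infty(\boldsymbol{x}_j,\mathcal{X}_0^* )$ is feasible for every $\boldsymbol{x}_j\in\mathcal{X}$ and all of its optimal solutions are subspace-preserving.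
   Context: For $\mathcal{X}_0\subseteq\mathcal{X}$ and $\boldsymbol{x}_j\in\mathcal{X}$, $f_\infty(\boldsymbol{x}_j,\mathcal{X}_0):=\min_{\boldsymbol{c}\in\mathbb{R}^N}\|\boldsymbol{c}\|_1$ subject to $\boldsymbol{x}_j=\sum_{i:\boldsymbol{x}_i\in\mathcal{X}_0}c_i\boldsymbol{x}_i$, with $f_\infty(\boldsymbol{x}_j,\mathcal{X}_0):=\infty$ if infeasible; $F_\infty(\mathcal{X}_0):=\sup_{\boldsymbol{x}_j\in\mathcal{X}}f_\infty(\boldsymbol{x}_j,\mathcal{X}_0)$. A vector $\boldsymbol{c}\in\mathbb{R}^N$ associated with $\boldsymbol{x}_j$ is subspace-preserving if $c_i\neq0$ implies that $\boldsymbol{x}_i$ and $\boldsymbol{x}_j$ lie in the same subspace $\mathcal{S}_\ell$. *)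

(* Defs.v *)
From HB Require Import structures.
From mathcomp Require Import all_boot all_order all_algebra.
From mathcomp Require Import all_classical all_reals ereal.
Set Implicit Arguments. Unset Strict Implicit. Unset Printing Implicit Defensive.
Import Order.TTheory GRing.Theory Num.Theory.
Local Open Scope ring_scope.
Local Open Scope classical_set_scope.

Definition norm1 (R : realType) (N : nat) (c : 'I_N -> R) : R :=
  \sum_(i < N) `|c i|.

Definition feasible (R : realType) (D N : nat) (X : 'I_N -> 'rV[R]_D)
  (X0 : {set 'I_N}) (j : 'I_N) (c : 'I_N -> R) : Prop :=
  X j = \sum_(i in X0) c i *: X i.

(* f_oo(x_j, X0) : min of ||c||_1 over feasible c, +oo if infeasible
   (ereal_inf of the empty set is +oo). *)
Definition f_inf (R : realType) (D N : nat) (X : 'I_N -> 'rV[R]_D)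
  (j : 'I_N) (X0 : {set 'I_N}) : \bar R :=
  ereal_inf [set (norm1 c)%:E | c in [set c | feasible X X0 j c]].

Definition F_inf (R : realType) (D N : nat) (X : 'I_N -> 'rV[R]_D)
  (X0 : {set 'I_N}) : \bar R :=
  ereal_sup [set f_inf X j X0 | j in [set: 'I_N]].

Definition optimal_sol (R : realType) (D N : nat) (X : 'I_N -> 'rV[R]_D)
  (X0 : {set 'I_N}) (j : 'I_N) (c : 'I_N -> R) : Prop :=
  feasible X X0 j c /\
  forall c', feasible X X0 j c' -> norm1 c <= norm1 c'.

Definition subspace_preserving (R : realType) (D N n : nat)
  (S : 'I_n -> 'M[R]_D) (X : 'I_N -> 'rV[R]_D) (j : 'I_N) (c : 'I_N -> R)
  : Prop :=
  forall i, c i != 0 ->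
    exists l : 'I_n, (X i <= S l)%MS /\ (X j <= S l)%MS.

Definition sqnorm (R : realType) (D : nat) (v : 'rV[R]_D) : R :=
  \sum_(k < D) (v 0 k) ^+ 2.

(* Main.v *)
Require Import Defs.
From HB Require Import structures.
From mathcomp Require Import all_boot all_order all_algebra.
From mathcomp Require Import all_classical all_reals ereal.
Import Order.TTheory GRing.Theory Num.Theory.
Local Open Scope ring_scope.

Lemma indep_zero (R : realType) (D n : nat) (S : 'I_n -> 'M[R]_D)
  (Hindep : (\sum_(l < n) \rank (S l))%N = \rank (\sum_(l < n) S l)%MS)
  (l : 'I_n) (v : 'rV[R]_D) :
  (v <= S l)%MS -> (v <= \sum_(m | m != l) S m)%MS -> v = 0.
Proof.
move=> H1 H2.
have dx : mxdirect (\sum_(l < n) S l)%MS by rewrite mxdirectE /= Hindep.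
have /mxdirect_sumsP H0 := dx; have H := H0 l isT.
apply/eqP; rewrite -submx0 -H sub_capmx H1 /=.
exact: H2.
Qed.

Lemma card_bigcup_le (T : finType) n (F : 'I_n -> {set T}) :
  (#|\bigcup_(l < n) F l| <= \sum_(l < n) #|F l|)%N.
Proof.
apply: (@big_ind2 _ _ (fun (A : {set T}) (s : nat) => is_true (#|A| <= s)%N)); first by rewrite cards0.
  move=> A a B b HA HB; case: (leq_card_setU A B) => H _.
  exact: leq_trans H (leq_add HA HB).
by [].
Qed.

Lemma key (R : realType) (D n N : nat) (S : 'I_n -> 'M[R]_D) (X : 'I_N -> 'rV[R]_D)
  (Hindep : (\sum_(l < n) \rank (S l))%N = \rank (\sum_(l < n) S l)%MS)
  (Hunion : forall j, exists l, (X j <= S l)%MS)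
  (X0 : {set 'I_N}) (j : 'I_N) (l : 'I_n) (c : 'I_N -> R) :
  (X j <= S l)%MS -> X j = \sum_(i in X0) c i *: X i ->
  X j = \sum_(i in X0 | (X i <= S l)%MS) c i *: X i.
Proof.
move=> Hjl Hc.
rewrite (bigID (fun i => (X i <= S l)%MS)) /= in Hc.
set A := \sum_(i in X0 | (X i <= S l)%MS) c i *: X i in Hc *.
set B := \sum_(i in X0 | ~~ (X i <= S l)%MS) c i *: X i in Hc.
have HA : (A <= S l)%MS.
  by apply: summx_sub => i /andP[_ Hi]; rewrite scalemx_sub.
have HB1 : (B <= S l)%MS.
  have -> : B = X j - A by rewrite Hc addrC addrK.
  by rewrite addmx_sub // (eqmx_opp A) .
have HB2 : (B <= \sum_(m | m != l) S m)%MS.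
  apply: summx_sub => i /andP[_ Hi]; apply: scalemx_sub.
  have [m Hm] := Hunion i.
  have Hml : m != l by apply: contraNneq Hi => <-.
  exact: submx_trans Hm (sumsmx_sup m Hml (submx_refl _)).
have := @indep_zero _ _ _ _ Hindep _ _ HB1 HB2.
by move=> HB0; rewrite Hc HB0 addr0.
Qed.

Theorem theorem1 (R : realType) (D n N : nat)
  (S : 'I_n -> 'M[R]_D) (X : 'I_N -> 'rV[R]_D)
  (* independent subspaces: sum of dims = dim of sum *)
  (Hindep : (\sum_(l < n) \rank (S l))%N = \rank (\sum_(l < n) S l)%MS)
  (* X = {x_1,...,x_N} is a set of N distinct points *)
  (Hinj : injective X)
  (* X lies in the union of the subspaces *)
  (Hunion : forall j, exists l, (X j <= S l)%MS)
  (* unit-norm points *)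
  (Hunit : forall j, sqnorm (X j) = 1)
  (* each S_l contains d_l points of X that span S_l *)
  (Hspan : forall l, exists T : {set 'I_N},
      #|T| = \rank (S l) /\ (forall i, i \in T -> (X i <= S l)%MS) /\
      (\sum_(i in T) <<X i>> == S l)%MS)
  (k : nat) (Hk : (\sum_(l < n) \rank (S l) <= k)%N)
  (X0 : {set 'I_N}) (HX0card : (#|X0| <= k)%N)
  (HX0min : forall Y : {set 'I_N}, (#|Y| <= k)%N ->
      (F_inf X X0 <= F_inf X Y)%E) :
  (forall l, exists T : {set 'I_N},
      T \subset X0 /\ (\rank (S l) <= #|T|)%N /\
      (forall i, i \in T -> (X i <= S l)%MS) /\
      free [seq X i | i in T]) /\
  (forall j, (exists c, feasible X X0 j c) /\
     forall c, optimal_sol X X0 j c -> subspace_preserving S X j c).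
Proof.
have [T HT] := boolp.choice Hspan.
pose Y := \bigcup_(l < n) T l.
have HYcard : (#|Y| <= k)%N.
  apply: leq_trans (@card_bigcup_le _ _ T) _.
  rewrite (eq_bigr (fun l => \rank (S l))) //.
  by move=> l _; case: (HT l).
have featY : forall j, exists c, feasible X Y j c.
  move=> j; have [l Hl] := Hunion j.
  case: (HT l) => _ [_ /andP[_ Hsub]].
  have : (X j <= \sum_(i in Y) <<X i>>)%MS.
    apply: submx_trans Hl (submx_trans Hsub _).
    apply/sumsmx_subP => t Ht; apply: (sumsmx_sup t) => //.
    by apply/bigcupP; exists l.
  case/sub_sums_genmxP => u Hu; exists (fun i => u i 0 0).
  rewrite /feasible Hu; apply: eq_bigr => i _.
  by rewrite {1}(mx11_scalar (u i)) mul_scalar_mx.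
have [cY HcY] := boolp.choice featY.
pose B := \sum_(j < N) norm1 (cY j).
have norm1_ge0 : forall c : 'I_N -> R, 0 <= norm1 c.
  by move=> c; apply: sumr_ge0 => i _; exact: normr_ge0.
have HFY : (F_inf X Y <= B%:E)%E.
  apply: ge_ereal_sup => _ [j _ <-].
  apply: le_trans (@ereal_inf_lbound _ _ (norm1 (cY j))%:E _) _; first by apply: imageP; exact: HcY.
  rewrite lee_fin /B (bigD1 j) //= lerDl.
  by apply: sumr_ge0 => i _.
have feas0 : forall j, exists c, feasible X X0 j c.
  move=> j; apply: boolp.contrapT => Hno.
  have Hinf : f_inf X j X0 = +oo%E.
    rewrite /f_inf.
    set E := (X in ereal_inf X).
    have -> : E = set0.
      apply/seteqP; split => x //= [c Hc _]; apply: Hno; by exists c.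
    exact: ereal_inf0.
  have : (f_inf X j X0 <= B%:E)%E.
    apply: le_trans (le_trans (HX0min Y HYcard) HFY).
    by apply: ereal_sup_ubound; apply: imageP.
  by rewrite Hinf.
split.
- move=> l.
  pose U := [set i in X0 | (X i <= S l)%MS].
  pose M := \matrix_(a < #|U|) X (enum_val a).
  have HXU : forall t, t \in U -> (X t <= M)%MS.
    move=> t Ht; apply: (eq_row_sub (enum_rank_in Ht t)).
    by rewrite rowK enum_rankK_in.
  have HSM : (S l <= M)%MS.
    case: (HT l) => _ [HTl /andP[_ Hsub]].
    apply: submx_trans Hsub _.
    apply/sumsmx_subP => t Ht; rewrite genmxE.
    have Htl := HTl t Ht.
    have [c Hc] := feas0 t.
    rewrite (@key _ _ _ _ _ _ Hindep Hunion _ _ _ _ Htl Hc).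
    apply: summx_sub => i Hi; apply: scalemx_sub; apply: HXU.
    by rewrite inE.
  pose f := maxrankfun M.
  pose g a := enum_val (f a).
  have ginj : injective g by move=> a b /enum_val_inj /maxrankfun_inj.
  have gU : forall a, g a \in U by move=> a; exact: enum_valP.
  exists (g @: [set: 'I_(\rank M)]).
  split.
    apply/fintype.subsetP => _ /imsetP[a _ ->]; by have := gU a; rewrite inE => /andP[].
  split.
    by rewrite card_imset // cardsT card_ord; exact: mxrankS HSM.
  split.
    move=> _ /imsetP[a _ ->]; by have := gU a; rewrite inE => /andP[].
  have Hperm : perm_eq [seq X i | i in g @: [set: 'I_(\rank M)]]
                       [seq X (g a) | a <- enum 'I_(\rank M)].
    rewrite /image_mem (map_comp X g); apply: perm_map.
    apply: uniq_perm; first exact: enum_uniq.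
      by rewrite (map_inj_uniq ginj) enum_uniq.
    move=> i; rewrite mem_enum; apply/imsetP/mapP => [[a _ ->]|[a _ ->]];
      by exists a; rewrite ?mem_enum.
  rewrite (perm_free Hperm).
  suff : free (map_tuple (fun a => X (g a)) (ord_tuple (\rank M))).
    by move=> H; rewrite -val_ord_tuple; exact: H.
  apply/freeP => kk Hkk a.
  move: Hkk; under eq_bigr do rewrite -tnth_nth tnth_map tnth_ord_tuple.
  move=> Hkk.
  have Hrow : (\row_a kk a) *m rowsub f M = 0.
    rewrite mulmx_sum_row -[RHS]Hkk; apply: eq_bigr => b _.
    by rewrite !mxE row_rowsub rowK.
  have := mulmx_free_eq0 (\row_a kk a) (maxrowsub_free M).
  rewrite Hrow eqxx => /esym/eqP/rowP/(_ a).
  by rewrite !mxE.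
- move=> j; split; first exact: feas0.
  move=> c [Hc Hopt] i0 Hci0.
  have [l Hl] := Hunion j.
  case Hi0: (X i0 <= S l)%MS; first by exists l.
  exfalso.
  pose c' i := if (i \in X0) && (X i <= S l)%MS then c i else 0.
  have Hc' : feasible X X0 j c'.
    rewrite /feasible (@key _ _ _ _ _ _ Hindep Hunion _ _ _ _ Hl Hc) big_mkcondr /=.
    apply: eq_bigr => i Hi; rewrite /c' Hi /=.
    by case: ifP => _; rewrite ?scale0r.
  have := Hopt c' Hc'.
  rewrite /norm1 (bigD1 i0) //= [X in _ <= X](bigD1 i0) //= /c' Hi0 andbF normr0 add0r.
  set r1 := \sum_(i < N | i != i0) _.
  set r2 := \sum_(i < N | i != i0) _.
  have H12 : r2 <= r1.
    apply: ler_sum => i _; case: ifP => _ //; rewrite normr0; exact: normr_ge0.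
  have Hpos : 0 < `|c i0| by rewrite normr_gt0.
  move=> H; have := le_trans H H12.
  by rewrite gerDr leNgt Hpos.
Qed.
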